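(* Let $(a_k)_{k\ge 0}$ be a sequence of positive reals such that $a_{k+1}/a_k$ is strictly decreasing in $k$ and tends to $0$. Let $F(t)=\sum_{k\ge0}a_kt^k$ (an entire function) and consider the power series family of distributions $f(k;t)=a_kt^k/F(t)$, $k\ge 0$, with parameter $t\ge 0$. Let $\mu(t)=\sum_k k f(k;t)$ be the mean, $t_0:=0$ and $t_k:=a_{k-1}/a_k$ for $k\ge1$; let $m_+(t)$ be the leading mode of $f(\cdot;t)$, and for $k\ge0$ let $\ell(k)$ be the unique solution $t\ge0$ of $\mu(t)=k$. Then the family is cross modal if and only if, for every $t\ge 0$ such that $\mu(t)$ is an integer, $\mu(t)$ is a mode of $f(\cdot;t)$. Moreover this condition is equivalent to each of the following: (i) $t_k\le \ell(k)\le t_{k+1}$ for all $k\ge1$; (ii) $k-1\le \mu(t_k)\le k$ for all $k\ge1$; (iii) $\sup_{t\ge0}|\mu(t)-m_+(t)|\le 1$.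
   Context: A mode of a probability function $g$ on $\{0,1,2,\dots\}$ is any $k$ with $g(k)=\max_j g(j)$. The leading mode $m_+$ of a log-concave probability function $g$ (extended by $g(-1)=0$) is the unique integer $k$ with $g(k-1)\le g(k)>g(k+1)$. The mean $\mu(t)$ is continuous and strictly increasing from $\mu(0)=0$ to $\infty$, so $\ell(k)$ is well defined. The family $\{f(\cdot;t):t\ge0\}$ is called cross modal if for every $k\ge0$ the likelihood $t\mapsto f(k;t)$ attains its maximum on $[0,\infty)$ and for every maximiser $t_0$ of it, $k$ is a mode of $f(\cdot;t_0)$. *)

(* Defs.v *)
From Stdlib Require Import Reals.
From Coquelicot Require Import Coquelicot.
Open Scope R_scope.

Definition PSF (a : nat -> R) (t : R) : R := Series (fun k => a k * t ^ k).

Definition pmf (a : nat -> R) (t : R) (k : nat) : R := a k * t ^ k / PSF a t.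

Definition mean (a : nat -> R) (t : R) : R := Series (fun k => INR k * pmf a t k).

Definition is_mode (g : nat -> R) (k : nat) : Prop := forall j : nat, g j <= g k.

Definition is_leading_mode (g : nat -> R) (k : nat) : Prop :=
  (match k with O => 0 | S k' => g k' end) <= g k /\ g (S k) < g k.

Definition cross_modal (f : R -> nat -> R) : Prop :=
  forall k : nat,
    (exists t0, 0 <= t0 /\ forall t, 0 <= t -> f t k <= f t0 k) /\
    (forall t0, 0 <= t0 -> (forall t, 0 <= t -> f t k <= f t0 k) ->
       is_mode (f t0) k).

Definition tk (a : nat -> R) (k : nat) : R :=
  match k with O => 0 | S k' => a k' / a k end.

(* Main.v *)
Require Import Defs.
From Stdlib Require Import Reals Lra Lia Classical.
From Coquelicot Require Import Coquelicot.
Open Scope R_scope.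

Definition Hyp (a : nat -> R) : Prop :=
  (forall k, 0 < a k) /\ (forall k, a (S (S k)) / a (S k) < a (S k) / a k) /\
  is_lim_seq (fun k => a (S k) / a k) 0.

Lemma Series_zero : Series (fun _ => 0) = 0.
Proof.
  transitivity (PSeries (fun _ => 0) 0); [|apply PSeries_const_0].
  unfold PSeries. apply Series_ext. intros; ring.
Qed.

Lemma Series_nonneg (h : nat -> R) : ex_series h -> (forall n, 0 <= h n) -> 0 <= Series h.
Proof.
  intros E P. rewrite <- Series_zero. apply Series_le; auto. intros; split; [lra|auto].
Qed.

Lemma Series_pos (h : nat -> R) (j : nat) : ex_series h -> (forall n, 0 <= h n) -> 0 < h j -> 0 < Series h.
Proof.
  intros E P Hj.
  rewrite (Series_incr_n h (S j)); [|lia|auto].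
  simpl.
  assert (0 <= Series (fun k => h (S (j + k)))).
  { apply Series_nonneg. apply (ex_series_incr_n h (S j)) in E. eapply ex_series_ext; [|exact E].
    intros; simpl; reflexivity. auto. }
  destruct j. simpl in *. lra.
  rewrite tech5. assert (0 <= sum_f_R0 h j) by (apply cond_pos_sum; auto). lra.
Qed.

Lemma CVa (a : nat -> R) : Hyp a -> CV_radius a = p_infty.
Proof.
  intros [Hp [Hd Hl]]. apply CV_radius_infinite_DAlembert.
  intros n; specialize (Hp n); lra.
  eapply is_lim_seq_ext; [|exact Hl]. intros n; simpl.
  rewrite Rabs_right; auto. apply Rle_ge. apply Rlt_le, Rdiv_lt_0_compat; auto.
Qed.

Lemma ex_u (a : nat -> R) x : Hyp a -> ex_series (fun k => a k * x ^ k).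
Proof.
  intros H. assert (E := CV_radius_inside a x). rewrite CVa in E; auto.
  specialize (E I). unfold ex_pseries in E. eapply ex_series_ext; [|exact E].
  intros n; simpl. rewrite pow_n_pow. unfold scal; simpl. unfold mult; simpl. ring.
Qed.

Definition cc (a : nat -> R) k := INR k * a k.

Lemma CVc (a : nat -> R) : Hyp a -> CV_radius (cc a) = p_infty.
Proof.
  intros H. rewrite <- (CVa a H), <- (CV_radius_derive a), <- (CV_radius_incr_1 (PS_derive a)).
  apply CV_radius_ext. intros [|n]; unfold cc; simpl. unfold zero; simpl. ring.
  unfold PS_derive. reflexivity.
Qed.

Lemma ex_ku (a : nat -> R) x : Hyp a -> ex_series (fun k => INR k * (a k * x ^ k)).
Proof.
  intros H. assert (E := CV_radius_inside (cc a) x). rewrite CVc in E; auto.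
  specialize (E I). unfold ex_pseries in E. eapply ex_series_ext; [|exact E].
  intros n; simpl. rewrite pow_n_pow. unfold scal, cc; simpl. unfold mult; simpl. ring.
Qed.

Lemma least_nat (P : nat -> Prop) : (exists n, P n) -> exists n, P n /\ forall m, (m < n)%nat -> ~ P m.
Proof.
  intros [n Hn]. apply NNPP. intros C.
  assert (forall n m, (m <= n)%nat -> ~ P m).
  { induction n0. intros m Hm. assert (m = 0%nat) by lia. subst. intros Pm. apply C. exists 0%nat. split; auto. intros; lia.
    intros m Hm Pm. destruct (Nat.eq_dec m (S n0)). subst. apply C. exists (S n0). split; auto.
    intros m0 Hm0. apply IHn0. lia. apply (IHn0 m); auto. lia. }
  apply (H n n); auto.
Qed.

Lemma ex_series_minusR (f g : nat -> R) : ex_series f -> ex_series g -> ex_series (fun n => f n - g n).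
Proof. intros Hf Hg; eapply ex_series_ext; [|apply (ex_series_minus f g Hf Hg)]. intros; simpl. reflexivity. Qed.

Lemma ex_series_scalR (c : R) (f : nat -> R) : ex_series f -> ex_series (fun n => c * f n).
Proof. intros Hf; eapply ex_series_ext; [|apply (ex_series_scal_l c f Hf)]. intros; simpl. reflexivity. Qed.

Lemma F0 (a : nat -> R) : PSF a 0 = a 0%nat.
Proof. apply PSeries_0. Qed.

Lemma pow_le_mono (s t : R) k : 0 <= s <= t -> s ^ k <= t ^ k.
Proof. intros; apply pow_incr; auto. Qed.

Lemma F_lt (a : nat -> R) s t : Hyp a -> 0 <= s < t -> PSF a s < PSF a t.
Proof.
  intros H Hst. assert (Hp := proj1 H).
  cut (0 < Series (fun k => a k * t ^ k - a k * s ^ k)).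
  { rewrite Series_minus; try apply ex_u; auto. unfold PSF. lra. }
  apply (Series_pos _ 1). apply ex_series_minusR; apply ex_u; auto.
  intros n. assert (s ^ n <= t ^ n) by (apply pow_le_mono; lra). specialize (Hp n). nra.
  simpl. specialize (Hp 1%nat). nra.
Qed.

Lemma F_pos (a : nat -> R) t : Hyp a -> 0 <= t -> 0 < PSF a t.
Proof.
  intros H Ht. assert (Hp := proj1 H). destruct (Req_dec t 0). subst; rewrite F0; auto.
  assert (PSF a 0 < PSF a t) by (apply F_lt; auto; lra). rewrite F0 in H1. specialize (Hp 0%nat). lra.
Qed.

Lemma ex_pmf (a : nat -> R) t : Hyp a -> ex_series (pmf a t).
Proof. intros H. unfold pmf. apply ex_series_scal_r. apply ex_u; auto. Qed.

Lemma ex_kpmf (a : nat -> R) t : Hyp a -> ex_series (fun k => INR k * pmf a t k).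
Proof. intros H. unfold pmf. eapply ex_series_ext; [|apply (ex_series_scal_r (/ PSF a t)); apply (ex_ku a t H)].
  intros; simpl. unfold Rdiv. ring. Qed.

Lemma sum_pmf (a : nat -> R) t : Hyp a -> 0 <= t -> Series (pmf a t) = 1.
Proof. intros H Ht. unfold pmf. unfold Rdiv. rewrite Series_scal_r. fold (PSF a t).
  assert (0 < PSF a t) by (apply F_pos; auto). field. lra. Qed.

Definition MM (a : nat -> R) t := Series (fun k => INR k * (a k * t ^ k)).

Lemma mean_eq (a : nat -> R) t : mean a t = MM a t / PSF a t.
Proof. unfold mean, pmf, MM. unfold Rdiv. rewrite <- Series_scal_r. apply Series_ext. intros; ring. Qed.

Lemma mean0 (a : nat -> R) : mean a 0 = 0.
Proof. rewrite mean_eq. unfold MM. 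
  replace (Series (fun k => INR k * (a k * 0 ^ k))) with (PSeries (cc a) 0).
  rewrite PSeries_0. unfold cc. simpl. unfold Rdiv; ring.
  unfold PSeries, cc. apply Series_ext; intros; ring. Qed.

Lemma mean_lt (a : nat -> R) s t : Hyp a -> 0 <= s < t -> mean a s < mean a t.
Proof.
  intros H Hst. assert (Hp := proj1 H).
  assert (Fs := F_pos a s H (proj1 Hst)). assert (Ft := F_pos a t H ltac:(lra)).
  assert (Fst := F_lt a s t H Hst).
  set (D := fun k => pmf a t k - pmf a s k).
  assert (ED : ex_series D) by (apply ex_series_minusR; apply ex_pmf; auto).
  assert (SD : Series D = 0).
  { unfold D. rewrite Series_minus; try apply ex_pmf; auto. rewrite !sum_pmf; auto; lra. }
  assert (D0 : D 0%nat < 0).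
  { unfold D, pmf. simpl. rewrite !Rmult_1_r. specialize (Hp 0%nat).
    apply Rlt_minus. apply Rmult_lt_compat_l; auto. apply Rinv_lt_contravar; auto. nra. }
  assert (Dex : exists k, 0 <= D k).
  { apply NNPP; intros C. 
    assert (0 < Series (fun k => - D k)).
    { apply (Series_pos _ 0). eapply ex_series_ext; [|apply (ex_series_scalR (-1) D ED)].
      intros; simpl; ring. intros n. assert (~ 0 <= D n) by (intro; apply C; eauto). lra. lra. }
    rewrite <- (Series_ext (fun k => -1 * D k)) in H0 by (intros; ring).
    rewrite Series_scal_l in H0. lra. }
  destruct (least_nat _ Dex) as [K [HK HKm]].
  assert (K1 : (1 <= K)%nat). { destruct K; [lra|lia]. }
  assert (Dlow : forall k, (k < K)%nat -> D k < 0).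
  { intros k Hk. specialize (HKm k Hk). lra. }
  assert (Dhigh : forall k, (K <= k)%nat -> 0 <= D k).
  { intros k Hk. replace k with (K + (k - K))%nat by lia. set (m := (k - K)%nat).
    unfold D, pmf in *. rewrite !pow_add.
    assert (A1 : a K * s ^ K / PSF a s <= a K * t ^ K / PSF a t) by lra.
    assert (A2 : s ^ m <= t ^ m) by (apply pow_le_mono; lra).
    assert (A3 : 0 <= s ^ m) by (apply pow_le; lra).
    assert (A4 : 0 <= a K * s ^ K / PSF a s).
    { apply Rmult_le_pos. apply Rmult_le_pos. specialize (Hp K); lra. apply pow_le; lra.
      apply Rlt_le, Rinv_0_lt_compat; auto. }
    assert (a (K + m)%nat * (s ^ K * s ^ m) / PSF a s = (a (K+m)%nat / a K) * ((a K * s ^ K / PSF a s) * s ^ m)).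
    { field. split; [lra|]. specialize (Hp K); lra. }
    assert (a (K + m)%nat * (t ^ K * t ^ m) / PSF a t = (a (K+m)%nat / a K) * ((a K * t ^ K / PSF a t) * t ^ m)).
    { field. split; [lra|]. specialize (Hp K); lra. }
    rewrite H0, H1. apply Rge_le, Rge_minus, Rle_ge.
    apply Rmult_le_compat_l. apply Rlt_le, Rdiv_lt_0_compat; auto.
    apply Rmult_le_compat; auto. }
  rewrite !(mean_eq a) in *.
  assert (Hm : forall x, 0 <= x -> mean a x = Series (fun k => INR k * pmf a x k)) by (intros; reflexivity).
  rewrite <- !mean_eq.
  assert (0 < Series (fun k => (INR k - INR K) * D k)).
  { apply (Series_pos _ 0).
    eapply ex_series_ext; [|apply (ex_series_minusR _ _ (ex_series_minusR _ _ (ex_kpmf a t H) (ex_kpmf a s H)) (ex_series_scalR (INR K) D ED))].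
    intros; unfold D; simpl; ring.
    intros n. destruct (Compare_dec.lt_dec n K). assert (INR n < INR K) by (apply lt_INR; auto). specialize (Dlow n l). nra.
    assert (INR K <= INR n) by (apply le_INR; lia). specialize (Dhigh n ltac:(lia)). nra.
    simpl. assert (1 <= INR K) by (apply (le_INR 1); auto). nra. }
  rewrite <- (Series_ext (fun k => (INR k * pmf a t k - INR k * pmf a s k) - INR K * D k)) in H0 by (intros; unfold D; ring).
  rewrite Series_minus in H0. rewrite Series_minus in H0 by (apply ex_kpmf; auto).
  rewrite Series_scal_l, SD in H0. unfold mean. lra.
  apply ex_series_minusR; apply ex_kpmf; auto. apply ex_series_scalR; auto.
Qed.

Lemma mean_le (a : nat -> R) s t : Hyp a -> 0 <= s <= t -> mean a s <= mean a t.
Proof. intros H Hst. destruct (Req_dec s t). subst; lra. apply Rlt_le, mean_lt; auto; lra. Qed.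

Lemma mean_pos (a : nat -> R) t : Hyp a -> 0 < t -> 0 < mean a t.
Proof. intros. rewrite <- (mean0 a). apply mean_lt; auto; lra. Qed.

Lemma tk_pos (a : nat -> R) k : Hyp a -> (1 <= k)%nat -> 0 < tk a k.
Proof. intros [Hp _] Hk. destruct k. lia. simpl. apply Rdiv_lt_0_compat; auto. Qed.

Lemma tk_step (a : nat -> R) k : Hyp a -> tk a k < tk a (S k).
Proof.
  intros H. destruct k. simpl. destruct H as [Hp _]. apply Rdiv_lt_0_compat; auto.
  destruct H as [Hp [Hd _]]. simpl. specialize (Hd k).
  assert (Ha := Hp k). assert (Hb := Hp (S k)). assert (Hc := Hp (S (S k))).
  replace (a k / a (S k)) with (/ (a (S k) / a k)) by (field; lra).
  replace (a (S k) / a (S (S k))) with (/ (a (S (S k)) / a (S k))) by (field; lra).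
  apply Rinv_lt_contravar; auto. apply Rmult_lt_0_compat; apply Rdiv_lt_0_compat; auto.
Qed.

Lemma tk_lt (a : nat -> R) i j : Hyp a -> (i < j)%nat -> tk a i < tk a j.
Proof.
  intros H Hij. induction Hij. apply tk_step; auto. assert (tk a m < tk a (S m)) by (apply tk_step; auto). lra.
Qed.

Lemma tk_le (a : nat -> R) i j : Hyp a -> (i <= j)%nat -> tk a i <= tk a j.
Proof. intros H Hij. destruct (Nat.eq_dec i j). subst; lra. apply Rlt_le, tk_lt; auto; lia. Qed.

Lemma tk0 (a : nat -> R) : tk a 0 = 0.
Proof. reflexivity. Qed.

Definition uu (a : nat -> R) t k := a k * t ^ k.

Lemma u_step_le (a : nat -> R) t j : Hyp a -> 0 <= t <= tk a (S j) -> uu a t (S j) <= uu a t j.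
Proof.
  intros [Hp _] Ht. unfold uu. simpl in *. assert (Ha := Hp j). assert (Hb := Hp (S j)).
  assert (a (S j) * t <= a j).
  { destruct Ht as [_ Ht]. apply (Rmult_le_compat_l (a (S j))) in Ht; [|lra].
    replace (a (S j) * (a j / a (S j))) with (a j) in Ht by (field; lra). lra. }
  assert (0 <= t ^ j) by (apply pow_le; lra). nra.
Qed.

Lemma u_step_ge (a : nat -> R) t j : Hyp a -> tk a (S j) <= t -> uu a t j <= uu a t (S j).
Proof.
  intros H Ht. assert (Hpos := tk_pos a (S j) H ltac:(lia)). destruct H as [Hp _].
  unfold uu. simpl in *. assert (Ha := Hp j). assert (Hb := Hp (S j)).
  assert (a j <= a (S j) * t).
  { apply (Rmult_le_compat_l (a (S j))) in Ht; [|lra].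
    replace (a (S j) * (a j / a (S j))) with (a j) in Ht by (field; lra). lra. }
  assert (0 <= t ^ j) by (apply pow_le; lra). nra.
Qed.

Lemma u_step_lt_iff (a : nat -> R) t j : Hyp a -> 0 < t -> (uu a t (S j) < uu a t j <-> t < tk a (S j)).
Proof.
  intros [Hp _] Ht. unfold uu. simpl. assert (Ha := Hp j). assert (Hb := Hp (S j)).
  assert (0 < t ^ j) by (apply pow_lt; lra).
  assert (E : a j / a (S j) - t = (a j - a (S j) * t) / a (S j)) by (field; lra).
  split; intros.
  - assert (a (S j) * t < a j) by nra.
    assert (0 < (a j - a (S j) * t) / a (S j)) by (apply Rdiv_lt_0_compat; lra). lra.
  - assert (0 < (a j - a (S j) * t) / a (S j)) by lra.
    assert (0 < a j - a (S j) * t).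
    { apply (Rmult_lt_compat_r (a (S j))) in H1; [|lra].
      replace ((a j - a (S j) * t) / a (S j) * a (S j)) with (a j - a (S j) * t) in H1 by (field; lra). lra. }
    nra.
Qed.

Lemma u_step_le_iff (a : nat -> R) t j : Hyp a -> 0 < t -> (uu a t (S j) <= uu a t j <-> t <= tk a (S j)).
Proof.
  intros [Hp _] Ht. unfold uu. simpl. assert (Ha := Hp j). assert (Hb := Hp (S j)).
  assert (0 < t ^ j) by (apply pow_lt; lra).
  assert (E : a j / a (S j) - t = (a j - a (S j) * t) / a (S j)) by (field; lra).
  split; intros.
  - assert (a (S j) * t <= a j).
    { apply Rmult_le_reg_r with (t ^ j); auto. nra. }
    assert (0 <= (a j - a (S j) * t) / a (S j)) by (apply Rmult_le_pos; [lra| apply Rlt_le, Rinv_0_lt_compat; lra]). lra.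
  - assert (0 <= (a j - a (S j) * t) / a (S j)) by lra.
    assert (0 <= a j - a (S j) * t).
    { apply (Rmult_le_compat_r (a (S j))) in H1; [|lra].
      replace ((a j - a (S j) * t) / a (S j) * a (S j)) with (a j - a (S j) * t) in H1 by (field; lra). lra. }
    nra.
Qed.

Lemma chain_up (u : nat -> R) n : (forall i, (i < n)%nat -> u i <= u (S i)) -> forall i, (i <= n)%nat -> u i <= u n.
Proof.
  induction n; intros Hs i Hi. assert (i = 0%nat) by lia; subst; lra.
  destruct (Nat.eq_dec i (S n)). subst; lra.
  assert (u i <= u n) by (apply IHn; auto; lia). assert (u n <= u (S n)) by (apply Hs; lia). lra.
Qed.

Lemma chain_down (u : nat -> R) k : (forall i, (k <= i)%nat -> u (S i) <= u i) -> forall j, (k <= j)%nat -> u j <= u k.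
Proof.
  intros Hs j Hj. induction Hj. lra. assert (u (S m) <= u m) by (apply Hs; auto). lra.
Qed.

Lemma pmf_le_iff (a : nat -> R) t i j : Hyp a -> 0 <= t -> (pmf a t i <= pmf a t j <-> uu a t i <= uu a t j).
Proof.
  intros H Ht. assert (F := F_pos a t H Ht). unfold pmf, uu. unfold Rdiv. split; intros.
  apply Rmult_le_reg_r with (/ PSF a t); auto. apply Rinv_0_lt_compat; auto.
  apply Rmult_le_compat_r; auto. apply Rlt_le, Rinv_0_lt_compat; auto.
Qed.

Lemma pmf_lt_iff (a : nat -> R) t i j : Hyp a -> 0 <= t -> (pmf a t i < pmf a t j <-> uu a t i < uu a t j).
Proof.
  intros H Ht. assert (F := F_pos a t H Ht). unfold pmf, uu. unfold Rdiv. split; intros.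
  apply Rmult_lt_reg_r with (/ PSF a t); auto. apply Rinv_0_lt_compat; auto.
  apply Rmult_lt_compat_r; auto. apply Rinv_0_lt_compat; auto.
Qed.

Lemma mode_iff (a : nat -> R) t k : Hyp a -> 0 <= t -> (is_mode (pmf a t) k <-> tk a k <= t <= tk a (S k)).
Proof.
  intros H Ht. unfold is_mode. split.
  - intros Hm. destruct (Req_dec t 0) as [->|Ht0].
    + destruct k. simpl. split; [lra|]. apply Rlt_le, Rdiv_lt_0_compat; apply (proj1 H).
      exfalso. specialize (Hm 0%nat). apply pmf_le_iff in Hm; auto; try lra. unfold uu in Hm. simpl in Hm.
      assert (Ha := proj1 H 0%nat). lra.
    + assert (Ht' : 0 < t) by lra. split.
      * destruct k. simpl; lra. specialize (Hm k). apply pmf_le_iff in Hm; auto.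
        destruct (Rlt_le_dec t (tk a (S k))); auto. apply (u_step_lt_iff a t k H Ht') in r. lra.
      * specialize (Hm (S k)). apply pmf_le_iff in Hm; auto.
        apply (u_step_le_iff a t k H Ht') in Hm. auto.
  - intros [H1 H2] j. apply pmf_le_iff; auto. destruct (Compare_dec.le_dec j k).
    + apply (chain_up (uu a t) k); auto. intros i Hi. apply u_step_ge; auto.
      assert (tk a (S i) <= tk a k) by (apply tk_le; auto). lra.
    + apply (chain_down (uu a t) k); [|lia]. intros i Hi. apply u_step_le; auto. split; auto.
      assert (tk a (S k) <= tk a (S i)) by (apply tk_le; auto; lia). lra.
Qed.

Lemma pmf_nonneg (a : nat -> R) t k : Hyp a -> 0 <= t -> 0 <= pmf a t k.
Proof.
  intros H Ht. assert (F := F_pos a t H Ht). unfold pmf. apply Rmult_le_pos.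
  apply Rmult_le_pos. apply Rlt_le, (proj1 H). apply pow_le; auto. apply Rlt_le, Rinv_0_lt_compat; auto.
Qed.

Lemma lead_iff (a : nat -> R) t m : Hyp a -> 0 <= t -> (is_leading_mode (pmf a t) m <-> tk a m <= t < tk a (S m)).
Proof.
  intros H Ht. unfold is_leading_mode. assert (Hp := proj1 H).
  destruct (Req_dec t 0) as [->|Ht0].
  - split.
    + intros [H1 H2]. apply pmf_lt_iff in H2; auto; try lra. unfold uu in H2. destruct m.
      split; [simpl; lra|]. apply tk_pos; auto.
      simpl in H2. lra.
    + intros [H1 H2]. destruct m. split. apply pmf_nonneg; auto; lra.
      apply pmf_lt_iff; auto; try lra. unfold uu; simpl. specialize (Hp 0%nat). lra.
      assert (0 < tk a (S m)) by (apply tk_pos; auto; lia). lra.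
  - assert (Ht' : 0 < t) by lra. split.
    + intros [H1 H2]. apply pmf_lt_iff in H2; auto. apply u_step_lt_iff in H2; auto. split; auto.
      destruct m. simpl; lra. apply pmf_le_iff in H1; auto.
      destruct (Rlt_le_dec t (tk a (S m))); auto. apply (u_step_lt_iff a t m H Ht') in r. lra.
    + intros [H1 H2]. split.
      destruct m. apply pmf_nonneg; auto. apply pmf_le_iff; auto. apply u_step_ge; auto.
      apply pmf_lt_iff; auto. apply u_step_lt_iff; auto.
Qed.

Lemma tk_unbounded (a : nat -> R) x : Hyp a -> 0 <= x -> exists N, x < tk a N.
Proof.
  intros H Hx. destruct H as [Hp [Hd Hl]]. apply is_lim_seq_Reals in Hl.
  destruct (Hl (/ (x + 1))) as [N HN]. apply Rinv_0_lt_compat; lra.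
  specialize (HN N (le_n N)). unfold Rdist in HN. rewrite Rminus_0_r in HN.
  assert (Ha := Hp N). assert (Hb := Hp (S N)).
  assert (0 < a (S N) / a N) by (apply Rdiv_lt_0_compat; auto).
  rewrite Rabs_right in HN by lra.
  exists (S N). simpl.
  replace (a N / a (S N)) with (/ (a (S N) / a N)) by (field; lra).
  assert (/ / (x + 1) < / (a (S N) / a N)) by (apply Rinv_lt_contravar; auto; apply Rmult_lt_0_compat; auto; apply Rinv_0_lt_compat; lra).
  rewrite Rinv_inv in *. lra.
Qed.

Lemma bracket (a : nat -> R) x : Hyp a -> 0 <= x -> exists j, tk a j <= x < tk a (S j).
Proof.
  intros H Hx. destruct (tk_unbounded a x H Hx) as [N HN].
  assert (exists j, x < tk a (S j)). { exists N. assert (tk a N < tk a (S N)) by (apply tk_step; auto). lra. }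
  destruct (least_nat _ H0) as [j [Hj Hmin]]. exists j. split; auto.
  destruct j. simpl; lra. destruct (Rle_lt_dec (tk a (S j)) x); auto.
  exfalso. apply (Hmin j); auto.
Qed.

Lemma mean_cont (a : nat -> R) x : Hyp a -> 0 <= x -> continuity_pt (mean a) x.
Proof.
  intros H Hx. apply continuity_pt_ext with (fun t => PSeries (cc a) t / PSeries a t).
  intros t. rewrite mean_eq. unfold MM, PSF. f_equal. unfold PSeries, cc. apply Series_ext; intros; ring.
  apply continuity_pt_div. apply PSeries_continuity. rewrite CVc; simpl; auto.
  apply PSeries_continuity. rewrite CVa; simpl; auto.
  assert (0 < PSF a x) by (apply F_pos; auto). unfold PSF in H0. unfold PSeries. lra.
Qed.

Lemma mean_unbounded (a : nat -> R) n : Hyp a -> exists t, 0 <= t /\ INR n < mean a t.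
Proof.
  intros H. set (c := INR n * INR (S n) + 1).
  assert (Hc : 1 <= c). { unfold c. assert (0 <= INR n) by apply pos_INR. assert (0 <= INR (S n)) by apply pos_INR. nra. }
  assert (T1 := tk_pos a (S n) H ltac:(lia)).
  set (t := c * tk a (S n)). assert (Ht : 0 < t) by (unfold t; nra).
  exists t. split; [lra|].
  set (u := uu a t).
  assert (Hup : forall i, (i <= n)%nat -> u i <= u n).
  { apply chain_up. intros i Hi. apply u_step_ge; auto.
    assert (tk a (S i) <= tk a (S n)) by (apply tk_le; auto; lia). unfold t. nra. }
  assert (Hpos : forall i, 0 <= u i).
  { intros i. unfold u, uu. apply Rmult_le_pos. apply Rlt_le, (proj1 H). apply pow_le; lra. }
  assert (Hun : 0 < u n). { unfold u, uu. apply Rmult_lt_0_compat. apply (proj1 H). apply pow_lt; lra. }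
  assert (HSn : u (S n) = c * u n).
  { unfold u, uu, t. simpl. assert (Ha := proj1 H n). assert (Hb := proj1 H (S n)). field. lra. }
  set (h := fun k => (INR k - INR n) * u k).
  assert (Eh : ex_series h).
  { unfold h. eapply ex_series_ext; [|apply (ex_series_minusR _ _ (ex_ku a t H) (ex_series_scalR (INR n) _ (ex_u a t H)))].
    intros; simpl. unfold u, uu. ring. }
  assert (Sh : 0 < Series h).
  { rewrite (Series_incr_n h (S (S n))); [|lia|auto]. simpl Init.Nat.pred.
    assert (0 <= Series (fun k => h (S (S n) + k)%nat)).
    { apply Series_nonneg. apply (ex_series_incr_n h (S (S n))) in Eh. exact Eh.
      intros k. unfold h. apply Rmult_le_pos; auto. assert (INR n <= INR (S (S n) + k)) by (apply le_INR; lia). lra. }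
    rewrite tech5.
    assert (sum_f_R0 (fun _ => - INR n * u n) n <= sum_f_R0 h n).
    { apply sum_Rle. intros i Hi. unfold h. assert (INR i <= INR n) by (apply le_INR; auto).
      assert (0 <= INR i) by apply pos_INR. specialize (Hup i Hi). specialize (Hpos i). nra. }
    rewrite sum_cte in H1.
    assert (h (S n) = c * u n) by (unfold h; rewrite S_INR, <- HSn; ring).
    unfold c in *. rewrite S_INR in *. nra. }
  rewrite mean_eq. assert (F := F_pos a t H ltac:(lra)).
  apply Rmult_lt_reg_r with (PSF a t); auto. unfold Rdiv. rewrite Rmult_assoc, Rinv_l, Rmult_1_r by lra.
  replace (Series h) with (MM a t - INR n * PSF a t) in Sh. lra.
  unfold h, MM, PSF. rewrite <- Series_scal_l, <- Series_minus. apply Series_ext. intros; unfold u, uu; ring.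
  apply (ex_ku a t H). apply ex_series_scalR, ex_u; auto.
Qed.

Lemma ell_exists (a : nat -> R) k : Hyp a -> exists s, 0 <= s /\ mean a s = INR k.
Proof.
  intros H. destruct k. exists 0. split; [lra|]. rewrite mean0. reflexivity.
  destruct (mean_unbounded a (S k) H) as [T [HT HmT]].
  assert (0 < INR (S k)) by (apply lt_0_INR; lia).
  assert (T <> 0). { intro; subst. rewrite mean0 in HmT. lra. }
  destruct (Ranalysis5.IVT_interv (fun x => mean a x - INR (S k)) 0 T) as [z [Hz Hfz]].
  intros x Hx. apply continuity_pt_minus. apply mean_cont; auto; lra. apply continuity_pt_const. intros ? ?; reflexivity.
  lra. rewrite mean0. lra. lra.
  exists z. split; lra.
Qed.

Lemma pow_exp_ln (r : R) j : 0 < r -> r ^ j = exp (INR j * ln r).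
Proof. intros. rewrite <- Rpower_pow; auto. Qed.

Lemma lik (a : nat -> R) t0 k t : Hyp a -> 0 <= t0 -> mean a t0 = INR k -> 0 <= t -> t <> t0 ->
  pmf a t k < pmf a t0 k.
Proof.
  intros H Ht0 Hm Ht Hne. assert (Hp := proj1 H).
  assert (F0p := F_pos a t0 H Ht0). assert (Ftp := F_pos a t H Ht).
  destruct k.
  - assert (t0 = 0). { destruct (Req_dec t0 0); auto. assert (0 < mean a t0) by (apply mean_pos; auto; lra). simpl in Hm. lra. }
    subst. assert (PSF a 0 < PSF a t) by (apply F_lt; auto; lra). unfold pmf. simpl. rewrite !Rmult_1_r.
    apply Rmult_lt_compat_l; auto. apply Rinv_lt_contravar; auto. nra.
  - assert (Ht0' : 0 < t0). { destruct (Req_dec t0 0); [|lra]. subst. rewrite mean0 in Hm. assert (0 < INR (S k)) by (apply lt_0_INR; lia). lra. }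
    assert (Hr : 0 < pmf a t0 (S k)). { unfold pmf. apply Rdiv_lt_0_compat; auto. apply Rmult_lt_0_compat; auto. apply pow_lt; auto. }
    destruct (Req_dec t 0) as [->|Htz].
    { unfold pmf. simpl. rewrite Rmult_0_l, Rmult_0_r. unfold Rdiv; rewrite Rmult_0_l. auto. }
    assert (Htp : 0 < t) by lra.
    set (rho := t / t0). assert (Hrho : 0 < rho) by (apply Rdiv_lt_0_compat; auto).
    set (L := ln rho).
    assert (HL : L <> 0). { intro HL. unfold L in HL. rewrite <- ln_1 in HL. apply ln_inv in HL; auto; [|lra].
      unfold rho in HL. apply Hne. apply (Rmult_eq_compat_r t0) in HL. unfold Rdiv in HL. rewrite Rmult_assoc, Rinv_l, Rmult_1_r in HL; lra. }
    set (K := S k).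
    set (h := fun j => uu a t j - (rho ^ K * uu a t0 j + (rho ^ K * L) * (INR j * uu a t0 j - INR K * uu a t0 j))).
    assert (hform : forall j, h j = uu a t0 j * rho ^ K * (exp ((INR j - INR K) * L) - 1 - (INR j - INR K) * L)).
    { intros j. unfold h. 
      assert (uu a t j = uu a t0 j * rho ^ j). { unfold uu. assert (E : t = rho * t0) by (unfold rho; field; lra). rewrite E at 1. rewrite Rpow_mult_distr. ring. }
      rewrite H0. rewrite !(pow_exp_ln rho) by auto. fold L.
      replace (INR j * L) with (INR K * L + (INR j - INR K) * L) by ring. rewrite exp_plus. ring. }
    assert (Eu := ex_u a t H). assert (Eu0 := ex_u a t0 H). assert (Eku0 := ex_ku a t0 H).
    assert (Sh : 0 < Series h).
    { apply (Series_pos _ 0).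
      unfold h. apply ex_series_minusR. exact Eu.
      eapply ex_series_ext; [|apply (ex_series_plus _ _ (ex_series_scalR (rho ^ K) _ Eu0) (ex_series_scalR (rho ^ K * L) _ (ex_series_minusR _ _ Eku0 (ex_series_scalR (INR K) _ Eu0))))].
      intros; simpl. unfold uu. reflexivity.
      intros j. rewrite hform. apply Rmult_le_pos. apply Rmult_le_pos. unfold uu. apply Rmult_le_pos. apply Rlt_le; auto. apply pow_le; lra.
      apply pow_le; lra. assert (T := exp_ineq1_le ((INR j - INR K) * L)). lra.
      rewrite hform. apply Rmult_lt_0_compat. apply Rmult_lt_0_compat. unfold uu. simpl. rewrite Rmult_1_r. auto. apply pow_lt; auto.
      assert ((INR 0 - INR K) * L <> 0). { apply Rmult_integral_contrapositive. split; auto. change (INR 0) with 0. unfold K. assert (0 < INR (S k)) by (apply lt_0_INR; lia). lra. }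
      assert (T := exp_ineq1 _ H0). lra. }
    unfold h in Sh. rewrite Series_minus in Sh; auto.
    2: { eapply ex_series_ext; [|apply (ex_series_plus _ _ (ex_series_scalR (rho ^ K) _ Eu0) (ex_series_scalR (rho ^ K * L) _ (ex_series_minusR _ _ Eku0 (ex_series_scalR (INR K) _ Eu0))))].
      intros; simpl. unfold uu. reflexivity. }
    rewrite Series_plus in Sh. 2: apply ex_series_scalR; auto.
    2: { apply ex_series_scalR. eapply ex_series_ext; [|apply (ex_series_minusR _ _ Eku0 (ex_series_scalR (INR K) _ Eu0))]. intros; unfold uu; reflexivity. }
    rewrite !Series_scal_l in Sh. rewrite Series_minus in Sh; auto. 2: apply ex_series_scalR; auto.
    rewrite Series_scal_l in Sh.
    fold (PSF a t) in Sh. change (Series (fun j => uu a t0 j)) with (PSF a t0) in Sh.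
    change (Series (fun j => INR j * uu a t0 j)) with (MM a t0) in Sh.
    change (Series (uu a t)) with (PSF a t) in Sh.
    rewrite mean_eq in Hm. fold K in Hm.
    assert (MM a t0 = INR K * PSF a t0). { rewrite <- Hm. field. lra. }
    rewrite H0 in Sh. change (Series (uu a t0)) with (PSF a t0) in Sh.
    assert (Hineq : rho ^ K * PSF a t0 < PSF a t) by nra.
    unfold pmf. fold K.
    assert (t ^ K = rho ^ K * t0 ^ K). { unfold rho. rewrite <- Rpow_mult_distr. f_equal. field. lra. }
    rewrite H1. assert (0 < rho ^ K) by (apply pow_lt; auto). assert (0 < t0 ^ K) by (apply pow_lt; auto).
    assert (HaK := Hp K).
    apply Rmult_lt_reg_r with (PSF a t * PSF a t0). nra.
    unfold Rdiv. field_simplify; try lra.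
    assert (0 < a K * t0 ^ K) by nra. nra.
Qed.

Lemma mean_zero_t (a : nat -> R) t : Hyp a -> 0 <= t -> mean a t = 0 -> t = 0.
Proof. intros H Ht Hm. destruct (Req_dec t 0); auto. assert (0 < mean a t) by (apply mean_pos; auto; lra). lra. Qed.

Definition PI_ (a : nat -> R) := forall k : nat, (1 <= k)%nat ->
            forall s, 0 <= s -> mean a s = INR k -> tk a k <= s <= tk a (S k).
Definition PII (a : nat -> R) := forall k : nat, (1 <= k)%nat ->
            INR k - 1 <= mean a (tk a k) <= INR k.
Definition PC (a : nat -> R) := forall (t : R) (k : nat), 0 <= t -> mean a t = INR k -> is_mode (pmf a t) k.
Definition PIII (a : nat -> R) := forall t : R, 0 <= t -> forall m : nat, is_leading_mode (pmf a t) m ->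
            Rabs (mean a t - INR m) <= 1.

Lemma tk_nonneg (a : nat -> R) k : Hyp a -> 0 <= tk a k.
Proof. intros H. destruct k. simpl; lra. apply Rlt_le, tk_pos; auto; lia. Qed.

Lemma CM_C (a : nat -> R) : Hyp a -> (cross_modal (pmf a) <-> PC a).
Proof.
  intros H. split.
  - intros CM t k Ht Hm. destruct (CM k) as [_ H2]. apply H2; auto. intros t' Ht'.
    destruct (Req_dec t' t). subst; lra. apply Rlt_le, (lik a t k t'); auto.
  - intros HC k. destruct (ell_exists a k H) as [s [Hs Hms]]. split.
    + exists s. split; auto. intros t Ht. destruct (Req_dec t s). subst; lra. apply Rlt_le, (lik a s k t); auto.
    + intros t0 Ht0 Hmax. assert (t0 = s).
      { destruct (Req_dec t0 s); auto. assert (pmf a t0 k < pmf a s k) by (apply lik; auto).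
        specialize (Hmax s Hs). lra. }
      subst. apply HC; auto.
Qed.

Lemma C_I (a : nat -> R) : Hyp a -> (PC a <-> PI_ a).
Proof.
  intros H. split.
  - intros HC k Hk s Hs Hms. apply (mode_iff a s k H Hs). apply HC; auto.
  - intros Hi t k Ht Hm. apply mode_iff; auto. destruct k.
    + simpl in Hm. assert (t = 0) by (apply (mean_zero_t a); auto). subst. split. simpl; lra. apply tk_nonneg; auto.
    + apply Hi; auto. lia.
Qed.

Lemma I_II (a : nat -> R) : Hyp a -> (PI_ a <-> PII a).
Proof.
  intros H. split.
  - intros Hi k Hk. destruct (ell_exists a k H) as [s [Hs Hms]].
    destruct (Hi k Hk s Hs Hms) as [H1 H2]. split.
    + destruct k. lia. destruct k.
      * assert (mean a 0 <= mean a (tk a 1)) by (apply mean_le; auto; split; [lra|apply tk_nonneg; auto]).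
        rewrite mean0 in H0. change (INR 1) with 1. lra.
      * destruct (ell_exists a (S k) H) as [s' [Hs' Hms']].
        destruct (Hi (S k) ltac:(lia) s' Hs' Hms') as [H3 H4].
        assert (mean a s' <= mean a (tk a (S (S k)))) by (apply mean_le; auto).
        rewrite (S_INR (S k)). lra.
    + rewrite <- Hms. apply mean_le; auto. split; auto. apply tk_nonneg; auto.
  - intros Hii k Hk s Hs Hms. split.
    + destruct (Rle_lt_dec (tk a k) s); auto. assert (mean a s < mean a (tk a k)) by (apply mean_lt; auto).
      specialize (Hii k Hk). lra.
    + destruct (Rle_lt_dec s (tk a (S k))); auto. assert (mean a (tk a (S k)) < mean a s) by (apply mean_lt; auto; split; auto; apply tk_nonneg; auto).
      specialize (Hii (S k) ltac:(lia)). rewrite S_INR in Hii. lra.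
Qed.

Lemma II_III (a : nat -> R) : Hyp a -> PII a -> PIII a.
Proof.
  intros H Hii t Ht m Hl. apply lead_iff in Hl; auto. destruct Hl as [H1 H2].
  apply Rabs_le. split.
  - destruct m. assert (mean a 0 <= mean a t) by (apply mean_le; auto; lra). rewrite mean0 in H0. change (INR 0) with 0. lra.
    assert (mean a (tk a (S m)) <= mean a t) by (apply mean_le; auto; split; auto; apply tk_nonneg; auto).
    specialize (Hii (S m) ltac:(lia)). lra.
  - assert (mean a t <= mean a (tk a (S m))) by (apply mean_le; auto; lra).
    specialize (Hii (S m) ltac:(lia)). rewrite S_INR in Hii. lra.
Qed.

Lemma III_C (a : nat -> R) : Hyp a -> PIII a -> PC a.
Proof.
  intros H Hiii t k Ht Hm. apply mode_iff; auto. destruct k.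
  { simpl in Hm. assert (t = 0) by (apply (mean_zero_t a); auto). subst. split. simpl; lra. apply tk_nonneg; auto. }
  split.
  - destruct (Rle_lt_dec (tk a (S k)) t) as [|Hlt]; auto. exfalso.
    set (t' := (t + tk a (S k)) / 2).
    assert (Ht' : 0 <= t') by (unfold t'; lra).
    destruct (bracket a t' H Ht') as [j [Hj1 Hj2]].
    assert (Hjk : (j < S k)%nat).
    { destruct (Compare_dec.lt_dec j (S k)); auto. assert (tk a (S k) <= tk a j) by (apply tk_le; auto; lia). unfold t' in *. lra. }
    assert (Hl : is_leading_mode (pmf a t') j) by (apply lead_iff; auto).
    specialize (Hiii t' Ht' j Hl). apply Rabs_le_between in Hiii.
    assert (mean a t < mean a t') by (apply mean_lt; auto; unfold t'; lra).
    assert (INR j + 1 <= INR (S k)) by (rewrite <- S_INR; apply le_INR; lia). lra.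
  - destruct (Rle_lt_dec t (tk a (S (S k)))) as [|Hlt]; auto. exfalso.
    set (t' := (t + tk a (S (S k))) / 2).
    assert (T2 := tk_nonneg a (S (S k)) H).
    assert (Ht' : 0 <= t') by (unfold t'; lra).
    destruct (bracket a t' H Ht') as [j [Hj1 Hj2]].
    assert (Hjk : (S (S (S k)) <= S j)%nat).
    { destruct (Compare_dec.le_dec (S (S (S k))) (S j)); auto. assert (tk a (S j) <= tk a (S (S k))) by (apply tk_le; auto; lia). unfold t' in *. lra. }
    assert (Hl : is_leading_mode (pmf a t') j) by (apply lead_iff; auto).
    specialize (Hiii t' Ht' j Hl). apply Rabs_le_between in Hiii.
    assert (mean a t' < mean a t) by (apply mean_lt; auto; unfold t'; lra).
    assert (INR (S k) + 1 <= INR j) by (rewrite <- S_INR; apply le_INR; lia). lra.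
Qed.

Theorem proposition1 (a : nat -> R)
  (Hpos : forall k, 0 < a k)
  (Hdec : forall k, a (S (S k)) / a (S k) < a (S k) / a k)
  (Hlim : is_lim_seq (fun k => a (S k) / a k) 0) :
  let C := forall (t : R) (k : nat), 0 <= t -> mean a t = INR k -> is_mode (pmf a t) k in
  (cross_modal (pmf a) <-> C) /\
  (C <-> (forall k : nat, (1 <= k)%nat ->
            forall s, 0 <= s -> mean a s = INR k -> tk a k <= s <= tk a (S k))) /\
  (C <-> (forall k : nat, (1 <= k)%nat ->
            INR k - 1 <= mean a (tk a k) <= INR k)) /\
  (C <-> (forall t : R, 0 <= t -> forall m : nat, is_leading_mode (pmf a t) m ->
            Rabs (mean a t - INR m) <= 1)).
Proof.
  intros C. assert (H : Hyp a) by (split; [|split]; auto).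
  change C with (PC a). change (PI_ a) with (PI_ a).
  assert (A1 := CM_C a H). assert (A2 := C_I a H). assert (A3 := I_II a H).
  assert (A4 := II_III a H). assert (A5 := III_C a H).
  fold (PI_ a). fold (PII a). fold (PIII a).
  split; [exact A1|]. split; [exact A2|]. split.
  - rewrite A2. exact A3.
  - split. intros HC. apply A4. apply A3. apply A2. exact HC. exact A5.
Qed.
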